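(* Let $X_1,\dots,X_n$ be independent random variables with $X_i\sim\mathrm{Bernoulli}(p_i)$, $p_i\in[0,1)$, let $S_n=\sum_{i=1}^n X_i$ and suppose $\lambda=E(S_n)=\sum_{i=1}^n p_i>0$. Then $$D(P_{S_n}\,\|\,\mathrm{Po}(\lambda))\le \frac{1}{\lambda}\sum_{i=1}^n\frac{p_i^3}{1-p_i}.$$
   Context: $P_{S_n}$ is the distribution of $S_n$; $\mathrm{Po}(\lambda)$ is the Poisson distribution with mean $\lambda$. $D(P\|Q)=\sum_x P(x)\log\frac{P(x)}{Q(x)}$ is the relative entropy (natural logarithm, with conventions $0\log(0/a)=0$, $a\log(a/0)=\infty$ for $a>0$). *)

(* Defs.v *)
From HB Require Import structures.
From mathcomp Require Import all_boot all_order all_algebra.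
From mathcomp Require Import all_classical all_reals all_analysis.
Set Implicit Arguments. Unset Strict Implicit. Unset Printing Implicit Defensive.
Import Order.TTheory GRing.Theory Num.Theory.
Local Open Scope ring_scope.

(* Distribution of S_n = X_1 + ... + X_n, where X_i ~ Bernoulli(p i) are
   independent: realised on the canonical product space {0,1}^n
   (outcomes x : {ffun 'I_n -> bool}, X_i(x) = x i) with the product
   probability  P{x} = prod_i (p i if x i else 1 - p i). *)
Definition dist_Sn (R : realType) (n : nat) (p : 'I_n -> R) (k : nat) : R :=
  \sum_(x : {ffun 'I_n -> bool} | (\sum_(i < n) (x i : nat))%N == k)
     \prod_(i < n) (if x i then p i else 1 - p i).

(* Po(lam): we use the library's poisson_pmf (poisson_distribution.v),
   equal to lam^k/k! * exp(-lam) when lam > 0. *)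

Definition rel_ent_term (R : realType) (P Q : nat -> R) (k : nat) : \bar R :=
  if P k == 0 then 0%E
  else if Q k == 0 then +oo%E
  else (P k * ln (P k / Q k))%:E.

Definition rel_ent (R : realType) (P Q : nat -> R) : \bar R :=
  limn (fun N => (\sum_(k < N) rel_ent_term P Q k)%E).

(* Main.v *)
Require Import Defs.
From HB Require Import structures.
From mathcomp Require Import all_boot all_order all_algebra.
From mathcomp Require Import all_classical all_reals all_analysis.
From mathcomp Require Import ring lra.
Import Order.TTheory GRing.Theory Num.Theory.
Import numFieldNormedType.Exports.
Local Open Scope classical_set_scope.
Local Open Scope ring_scope.

(* Proof: Bobkov-Ledoux modified log-Sobolev
   inequality for Poisson (via binomial tensorisation and a limit), plus
   subadditivity of the scaled Fisher information along Bernoulli convolutions. *)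

Section Part1.
Variable R : realType.
Local Notation phi := (fun x : R => x * ln x).

Definition binp (M : nat) (p : R) (k : nat) : R :=
  'C(M, k)%:R * p ^+ k * (1 - p) ^+ (M - k).
Definition EB (M : nat) (p : R) (F : nat -> R) : R :=
  \sum_(k < M.+1) binp M p k * F k.

Lemma binp_ge0 M p k : 0 <= p <= 1 -> 0 <= binp M p k.
Proof.
move=> /andP[p0 p1]; rewrite /binp; apply: mulr_ge0; first apply: mulr_ge0.
- exact: ler0n.
- exact: exprn_ge0.
- by apply: exprn_ge0; rewrite subr_ge0.
Qed.

Lemma binpS M p k : binp M.+1 p k.+1 = p * binp M p k + (1 - p) * binp M p k.+1.
Proof.
rewrite /binp binS natrD subSS; case: (ltnP k M) => hk.
  rewrite -(subnSK hk) !exprS; ring.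
rewrite bin_small ?ltnS // (_ : M - k = 0)%N; last by apply/eqP; rewrite subn_eq0.
rewrite (_ : M - k.+1 = 0)%N; last by apply/eqP; rewrite subn_eq0 (leq_trans hk).
rewrite !expr0 exprS; ring.
Qed.

Lemma binp0 M p : binp M.+1 p 0 = (1 - p) * binp M p 0.
Proof. by rewrite /binp !bin0 !subn0 exprS; ring. Qed.

Lemma binp_big M p k : (M < k)%N -> binp M p k = 0.
Proof. by move=> h; rewrite /binp bin_small // !mul0r. Qed.

Lemma EB_S M p F : EB M.+1 p F = EB M p (fun t => (1 - p) * F t + p * F t.+1).
Proof.
rewrite /EB big_ord_recl /= binp0.
under eq_bigr do rewrite /bump /= binpS.
have e1 : \sum_(i < M.+1) binp M p i.+1 * F i.+1 = \sum_(i < M) binp M p i.+1 * F i.+1.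
  by rewrite big_ord_recr /= binp_big // mul0r addr0.
have e2 : \sum_(i < M.+1) binp M p i * F i = binp M p 0 * F 0 + \sum_(i < M) binp M p i.+1 * F i.+1.
  by rewrite big_ord_recl.
have e3 : \sum_(i < M.+1) binp M p i * ((1 - p) * F i + p * F i.+1) =
   (1 - p) * \sum_(i < M.+1) binp M p i * F i + p * \sum_(i < M.+1) binp M p i * F i.+1.
  rewrite !mulr_sumr -big_split /=; apply: eq_bigr => i _; ring.
rewrite e3 e2.
have e4 : \sum_(i < M.+1) (p * binp M p i + (1 - p) * binp M p i.+1) * F i.+1 =
  p * \sum_(i < M.+1) binp M p i * F i.+1 + (1 - p) * \sum_(i < M.+1) binp M p i.+1 * F i.+1.
  rewrite !mulr_sumr -big_split /=; apply: eq_bigr => i _; ring.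
rewrite e4 e1; ring.
Qed.

Lemma EB_le M p F G : 0 <= p <= 1 -> (forall k, F k <= G k) -> EB M p F <= EB M p G.
Proof.
move=> hp h; apply: ler_sum => i _; apply: ler_wpM2l; [exact: binp_ge0|exact: h].
Qed.

Lemma EB_lin M p a b F G :
  EB M p (fun k => a * F k + b * G k) = a * EB M p F + b * EB M p G.
Proof. rewrite /EB !mulr_sumr -big_split /=; apply: eq_bigr => i _; ring. Qed.

Lemma EB0 p F : EB 0 p F = F 0%N.
Proof. by rewrite /EB big_ord1 /binp bin0 !expr0 !mul1r. Qed.

Lemma two_point (p a b : R) : 0 <= p <= 1 -> 0 <= a -> 0 <= b ->
  (1 - p) * phi a + p * phi b - phi ((1 - p) * a + p * b)
   <= p * (1 - p) * ((b - a) ^+ 2 / ((1 - p) * a + p * b)).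
Proof.
move=> /andP[p0 p1] a0 b0.
have q0 : 0 <= 1 - p by rewrite subr_ge0.
set m := (1 - p) * a + p * b.
have m0 : 0 <= m by rewrite /m addr_ge0 // mulr_ge0.
case: (eqVneq m 0) => [me|mne].
  have [h1 h2] : (1 - p) * a = 0 /\ p * b = 0.
    move: me; rewrite /m => /eqP; rewrite paddr_eq0 ?mulr_ge0 //.
    by case/andP => /eqP -> /eqP ->.
  rewrite me invr0 !mulr0 mul0r subr0 !mulrA h1 h2 !mul0r addr0; exact: lexx.
have mpos : 0 < m by rewrite lt_def mne m0.
have key : forall x, 0 <= x -> x * ln x - x * ln m <= x * (x / m - 1).
  move=> x x0; case: (eqVneq x 0) => [->|xne]; first by rewrite !mul0r subr0.
  have xpos : 0 < x by rewrite lt_def xne x0.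
  rewrite -mulrBr; apply: ler_wpM2l => //.
  rewrite -ln_div ?posrE //.
  have H := @le_ln1Dx R (x / m - 1).
  rewrite (_ : 1 + (x / m - 1) = x / m) in H; last by ring.
  apply: H; have := divr_gt0 xpos mpos; lra.
have E : (1 - p) * (a * (a / m - 1)) + p * (b * (b / m - 1)) =
   p * (1 - p) * ((b - a) ^+ 2 / m).
  rewrite /m; field; exact: mne.
rewrite -E.
have -> : (1 - p) * (a * ln a) + p * (b * ln b) - m * ln m =
  (1 - p) * (a * ln a - a * ln m) + p * (b * ln b - b * ln m).
  rewrite /m; ring.
apply: lerD; apply: ler_wpM2l => //; exact: key.
Qed.

Lemma cs2 (w1 w2 s1 s2 : R) : 0 <= w1 -> 0 <= w2 ->
  (w1 * s1 + w2 * s2) ^+ 2 / (w1 + w2) <= w1 * s1 ^+ 2 + w2 * s2 ^+ 2.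
Proof.
move=> h1 h2.
have r0 : 0 <= w1 * s1 ^+ 2 + w2 * s2 ^+ 2 by rewrite addr_ge0 // mulr_ge0 // sqr_ge0.
case: (eqVneq (w1 + w2) 0) => [->|ne]; first by rewrite invr0 mulr0.
have pos : 0 < w1 + w2 by rewrite lt_def ne addr_ge0.
rewrite ler_pdivrMr //.
have := mulr_ge0 (mulr_ge0 h1 h2) (sqr_ge0 (s1 - s2)).
move=> H; nra.
Qed.

Lemma mul_div_cancel (x y : R) : (y = 0 -> x = 0) -> y * (x / y) = x.
Proof.
move=> h; case: (eqVneq y 0) => [y0|yne]; first by rewrite (h y0) y0 mul0r.
by rewrite mulrC divfK.
Qed.

Lemma mul_div_sq (x y : R) : y * (x / y) ^+ 2 = x ^+ 2 / y.
Proof.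
case: (eqVneq y 0) => [->|yne]; first by rewrite invr0 !mulr0 mul0r.
by field.
Qed.

Lemma conv2 (p x1 y1 x2 y2 : R) : 0 <= p <= 1 -> 0 <= y1 -> 0 <= y2 ->
  (y1 = 0 -> x1 = 0) -> (y2 = 0 -> x2 = 0) ->
  ((1 - p) * x1 + p * x2) ^+ 2 / ((1 - p) * y1 + p * y2)
   <= (1 - p) * (x1 ^+ 2 / y1) + p * (x2 ^+ 2 / y2).
Proof.
move=> /andP[p0 p1] y10 y20 h1 h2.
have q0 : 0 <= 1 - p by rewrite subr_ge0.
have := @cs2 ((1 - p) * y1) (p * y2) (x1 / y1) (x2 / y2) (mulr_ge0 q0 y10) (mulr_ge0 p0 y20).
have e1 : (1 - p) * y1 * (x1 / y1) = (1 - p) * x1 by rewrite -mulrA mul_div_cancel.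
have e2 : p * y2 * (x2 / y2) = p * x2 by rewrite -mulrA mul_div_cancel.
have e3 : (1 - p) * y1 * (x1 / y1) ^+ 2 = (1 - p) * (x1 ^+ 2 / y1) by rewrite -mulrA mul_div_sq.
have e4 : p * y2 * (x2 / y2) ^+ 2 = p * (x2 ^+ 2 / y2) by rewrite -mulrA mul_div_sq.
by rewrite e1 e2 e3 e4 -!mulrA.
Qed.

Lemma zero2 (p a b : R) : 0 < p < 1 -> 0 <= a -> 0 <= b ->
  (1 - p) * a + p * b = 0 -> a = 0 /\ b = 0.
Proof.
move=> /andP[p0 p1] a0 b0 /eqP.
have q0 : 0 < 1 - p by rewrite subr_gt0.
rewrite paddr_eq0 ?mulr_ge0 ?(ltW q0) ?(ltW p0) // => /andP[].
by rewrite !mulf_eq0 (gt_eqF q0) (gt_eqF p0) /= => /eqP -> /eqP ->.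
Qed.

Definition hf (p : R) (f : nat -> R) (t : nat) : R :=
  (f t.+1 - f t) ^+ 2 / ((1 - p) * f t + p * f t.+1).

Lemma fmlsi M p f : 0 < p < 1 -> (forall k, 0 <= f k) ->
  EB M p (fun k => phi (f k)) - phi (EB M p f)
   <= M%:R * (p * (1 - p)) * EB M.-1 p (hf p f).
Proof.
move=> /andP[p0 p1]; have hp : 0 <= p <= 1 by rewrite (ltW p0) (ltW p1).
have q0 : 0 < 1 - p by rewrite subr_gt0.
have hpp : 0 < p < 1 by rewrite p0 p1.
elim: M f => [|M IH] f f0.
  by rewrite !EB0 /= subrr !mul0r.
rewrite !EB_S.
set g := fun t => (1 - p) * f t + p * f t.+1.
have g0 : forall k, 0 <= g k by move=> k; rewrite /g addr_ge0 // mulr_ge0 // ltW.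
have split : EB M p (fun t => (1 - p) * phi (f t) + p * phi (f t.+1)) - phi (EB M p g) =
  EB M p (fun t => 1 * ((1 - p) * phi (f t) + p * phi (f t.+1) - phi (g t)) + 1 * phi (g t))
  - phi (EB M p g).
  by congr (_ - _); apply: eq_bigr => i _; congr (_ * _); ring.
rewrite split EB_lin !mul1r -addrA.
have A1 : EB M p (fun t => (1 - p) * phi (f t) + p * phi (f t.+1) - phi (g t))
   <= p * (1 - p) * EB M p (hf p f).
  rewrite -[X in _ <= X]addr0 -(mul0r (EB M p (hf p f))) -EB_lin.
  apply: EB_le => // k; rewrite mul0r addr0; exact: two_point.
have A2 := IH g g0.
have A3 : M%:R * (p * (1 - p)) * EB M.-1 p (hf p g) <= M%:R * (p * (1 - p)) * EB M p (hf p f).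
  case: M {IH A1 A2 split} => [|M]; first by rewrite /= !mul0r.
  apply: ler_wpM2l; first by rewrite mulr_ge0 // mulr_ge0 // ltW.
  rewrite EB_S /=; apply: EB_le => // t; rewrite /hf /g.
  have -> : (g t.+1 - g t) = (1 - p) * (f t.+1 - f t) + p * (f t.+2 - f t.+1) by rewrite /g; ring.
  have -> : (1 - p) * g t + p * g t.+1 = (1 - p) * ((1 - p) * f t + p * f t.+1) + p * ((1 - p) * f t.+1 + p * f t.+2) by rewrite /g.
  apply: conv2 => //.
  - by rewrite addr_ge0 // mulr_ge0 // ltW.
  - by rewrite addr_ge0 // mulr_ge0 // ltW.
  - by move=> /(@zero2 p _ _ hpp (f0 _) (f0 _)) [-> ->]; rewrite subrr.
  - by move=> /(@zero2 p _ _ hpp (f0 _) (f0 _)) [-> ->]; rewrite subrr.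
have -> : M.+1%:R * (p * (1 - p)) * EB M p (hf p f) = p * (1 - p) * EB M p (hf p f) + M%:R * (p * (1 - p)) * EB M p (hf p f) by rewrite -natr1; ring.
apply: lerD => //; exact: le_trans A2 A3.
Qed.

End Part1.

Arguments binp {R}. Arguments EB {R}. Arguments hf {R}.

Section Part2.
Variable R : realType.

Lemma mdc2 (x y : R) : (y = 0 -> x = 0) -> y * (x / y) = x.
Proof.
move=> h; case: (eqVneq y 0) => [y0|yne]; first by rewrite (h y0) y0 mul0r.
by rewrite mulrC divfK.
Qed.

Lemma mds2 (x y : R) : y * (x / y) ^+ 2 = x ^+ 2 / y.
Proof.
case: (eqVneq y 0) => [->|yne]; first by rewrite invr0 !mulr0 mul0r.
by field.
Qed.

Lemma cs2b (w1 w2 s1 s2 : R) : 0 <= w1 -> 0 <= w2 ->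
  (w1 * s1 + w2 * s2) ^+ 2 / (w1 + w2) <= w1 * s1 ^+ 2 + w2 * s2 ^+ 2.
Proof.
move=> h1 h2.
have r0 : 0 <= w1 * s1 ^+ 2 + w2 * s2 ^+ 2 by rewrite addr_ge0 // mulr_ge0 // sqr_ge0.
case: (eqVneq (w1 + w2) 0) => [->|ne]; first by rewrite invr0 mulr0.
have pos : 0 < w1 + w2 by rewrite lt_def ne addr_ge0.
rewrite ler_pdivrMr //.
have := mulr_ge0 (mulr_ge0 h1 h2) (sqr_ge0 (s1 - s2)).
move=> H; nra.
Qed.

Fixpoint Pf (s : seq R) (k : nat) : R :=
  match s with
  | [::] => (k == 0)%:R
  | a :: s' => (1 - a) * Pf s' k + a * (if k is k'.+1 then Pf s' k' else 0)
  end.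
Definition lam (s : seq R) : R := \sum_(a <- s) a.
Definition Af (P : nat -> R) (l : R) (k : nat) : R := k.+1%:R * P k.+1 - l * P k.
Definition Jf (P : nat -> R) (l : R) (m : nat) : R := \sum_(k < m.+1) Af P l k ^+ 2 / P k.
Definition okp (s : seq R) := all (fun a => (0 <= a) && (a < 1)) s.

Lemma Pf_ge0 s k : okp s -> 0 <= Pf s k.
Proof.
elim: s k => [|a s IH] k /=; first by case: (k == 0).
case/andP => /andP[a0 a1] ok.
apply: addr_ge0; apply: mulr_ge0 => //; first by rewrite subr_ge0 ltW.
  exact: IH.
by case: k => // k; exact: IH.
Qed.

Lemma Pf_big s k : (size s < k)%N -> Pf s k = 0.
Proof.
elim: s k => [|a s IH] k /=; first by case: k.
move=> hk; rewrite IH ?(ltn_trans _ hk) // mulr0 add0r.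
by case: k hk => // k hk; rewrite IH // mulr0.
Qed.

Lemma Pf_dc s t : okp s -> Pf s t = 0 -> Pf s t.+1 = 0.
Proof.
elim: s t => [|a s IH] t /=; first by case: t.
case/andP => /andP[a0 a1] ok /eqP.
have q0 : 0 < 1 - a by rewrite subr_gt0.
rewrite paddr_eq0; last first.
- by apply: mulr_ge0 => //; case: t => [|t]; [exact: lexx| exact: Pf_ge0].
- by apply: mulr_ge0; [exact: ltW | exact: Pf_ge0].
case/andP; rewrite mulf_eq0 (gt_eqF q0) /= => /eqP h _.
by rewrite IH // h !mulr0 addr0.
Qed.

Lemma Af_dc s l k : okp s -> Pf s k = 0 -> Af (Pf s) l k = 0.
Proof. by move=> ok h; rewrite /Af h (@Pf_dc s k ok h) !mulr0 subrr. Qed.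

Lemma sum_shift (m : nat) (a : R) (X Y : nat -> R) : X m.+1 = 0 ->
  \sum_(z < m.+2) ((1 - a) * X z + a * (if (z : nat) is z'.+1 then Y z' else 0)) =
  (1 - a) * \sum_(z < m.+1) X z + a * \sum_(z < m.+1) Y z.
Proof.
move=> hX; rewrite big_split /= -!mulr_sumr.
rewrite [\sum_(i < m.+2) X i]big_ord_recr /= hX addr0.
by rewrite [\sum_(i < m.+2) _]big_ord_recl /= add0r.
Qed.

Lemma Pf_sum s : okp s -> \sum_(k < (size s).+1) Pf s k = 1.
Proof.
elim: s => [|a s IH] /=; first by rewrite big_ord1.
case/andP => _ ok.
rewrite (@sum_shift (size s) a (Pf s) (Pf s)) ?IH //; first by ring.
by rewrite Pf_big.
Qed.

Lemma lam_cons a s : lam (a :: s) = a + lam s.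
Proof. by rewrite /lam big_cons. Qed.

Lemma Af_cons a s l z :
  Af (Pf (a :: s)) (a + l) z =
  (1 - a) * Af (Pf s) l z + a * (if z is z'.+1 then Af (Pf s) l z' else 0)
  + a ^+ 2 * Pf s z - a ^+ 2 * (if z is z'.+1 then Pf s z' else 0).
Proof.
case: z => [|z]; rewrite /Af /=; first by ring.
rewrite -[z.+2%:R]natr1; ring.
Qed.

Lemma pt (a Pz Az Pz' Az' : R) : 0 <= a < 1 -> 0 <= Pz -> 0 <= Pz' ->
  (Pz = 0 -> Az = 0) -> (Pz' = 0 -> Az' = 0) ->
  ((1 - a) * Az + a * Az' + a ^+ 2 * Pz - a ^+ 2 * Pz') ^+ 2 / ((1 - a) * Pz + a * Pz')
  <= (1 - a) * (Pz * (Az / Pz + a ^+ 2 / (1 - a)) ^+ 2) + a * (Pz' * (Az' / Pz' - a) ^+ 2).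
Proof.
move=> /andP[a0 a1] P0 P0' h h'.
have qn : 1 - a != 0 by rewrite subr_eq0 (gt_eqF a1).
have q0 : 0 <= 1 - a by rewrite subr_ge0 ltW.
have E : (1 - a) * Az + a * Az' + a ^+ 2 * Pz - a ^+ 2 * Pz' =
   ((1 - a) * Pz) * (Az / Pz + a ^+ 2 / (1 - a)) + (a * Pz') * (Az' / Pz' - a).
  case: (eqVneq Pz 0) => [z0|zn].
    rewrite (h z0) z0 !(invr0, mul0r, mulr0, add0r, addr0).
    case: (eqVneq Pz' 0) => [z1|zn1]; last by field; rewrite ?qn ?zn1.
    by rewrite (h' z1) z1 !(invr0, mul0r, mulr0, add0r, addr0, subrr) oppr0.
  case: (eqVneq Pz' 0) => [z1|zn1]; last by field; rewrite ?qn ?zn ?zn1.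
  by rewrite (h' z1) z1 !(invr0, mul0r, mulr0, add0r, addr0, subr0); field; rewrite ?qn ?zn.
rewrite E.
have -> : (1 - a) * (Pz * (Az / Pz + a ^+ 2 / (1 - a)) ^+ 2) + a * (Pz' * (Az' / Pz' - a) ^+ 2)
  = ((1 - a) * Pz) * (Az / Pz + a ^+ 2 / (1 - a)) ^+ 2 + (a * Pz') * (Az' / Pz' - a) ^+ 2 by ring.
apply: cs2b; exact: mulr_ge0.
Qed.

Lemma J_bound s : okp s -> Jf (Pf s) (lam s) (size s) <= \sum_(a <- s) a ^+ 3 / (1 - a).
Proof.
elim: s => [|a s IH].
  by move=> _; rewrite /Jf big_ord1 /Af /lam !big_nil /= mulr0 mul0r subr0 expr0n /= mul0r.
case/andP => /andP[a0 a1] ok.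
have qn : 1 - a != 0 by rewrite subr_eq0 (gt_eqF a1).
rewrite lam_cons big_cons /Jf /=.
set P := Pf s; set l := lam s; set m := size s; set c := a ^+ 2 / (1 - a).
pose X k := P k * (Af P l k / P k + c) ^+ 2.
pose Y k := P k * (Af P l k / P k - a) ^+ 2.
have hA : forall k, P k = 0 -> Af P l k = 0 by move=> k; exact: Af_dc.
have step : \sum_(k < m.+2) Af (Pf (a :: s)) (a + l) k ^+ 2 / Pf (a :: s) k <=
   \sum_(k < m.+2) ((1 - a) * X k + a * (if (k : nat) is k'.+1 then Y k' else 0)).
  apply: ler_sum => -[[|k] hk] _; rewrite Af_cons /=.
  - have := @pt a (P 0%N) (Af P l 0) 0 0; rewrite !mul0r !mulr0 !addr0 !subr0.
    apply; rewrite ?a0 ?a1 ?lexx //; first exact: Pf_ge0.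
    exact: hA.
  - apply: pt; rewrite ?a0 ?a1 //; try exact: Pf_ge0; exact: hA.
apply: le_trans step _.
rewrite sum_shift; last by rewrite /X /P Pf_big // !mul0r.
have eX : \sum_(k < m.+1) X k =
   Jf P l m + 2 * c * \sum_(k < m.+1) Af P l k + c ^+ 2 * \sum_(k < m.+1) P k.
  rewrite /Jf !mulr_sumr -!big_split /=; apply: eq_bigr => k _.
  rewrite /X (_ : P k * (Af P l k / P k + c) ^+ 2 = P k * (Af P l k / P k) ^+ 2
     + 2 * c * (P k * (Af P l k / P k)) + c ^+ 2 * P k); last by ring.
  by rewrite mds2 mdc2 //; exact: hA.
have eY : \sum_(k < m.+1) Y k =
   Jf P l m - 2 * a * \sum_(k < m.+1) Af P l k + a ^+ 2 * \sum_(k < m.+1) P k.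
  rewrite /Jf !mulr_sumr -sumrN -!big_split /=; apply: eq_bigr => k _.
  rewrite /Y (_ : P k * (Af P l k / P k - a) ^+ 2 = P k * (Af P l k / P k) ^+ 2
     - 2 * a * (P k * (Af P l k / P k)) + a ^+ 2 * P k); last by ring.
  by rewrite mds2 mdc2 //; exact: hA.
rewrite eX eY /P Pf_sum // -/P.
set J := Jf P l m; set S := \sum_(k < m.+1) Af P l k.
have -> : (1 - a) * (J + 2 * c * S + c ^+ 2 * 1) + a * (J - 2 * a * S + a ^+ 2 * 1)
   = a ^+ 3 / (1 - a) + J by rewrite /c; field.
by rewrite lerD2l; exact: IH.
Qed.

End Part2.

Arguments Pf {R}. Arguments lam {R}. Arguments Af {R}. Arguments Jf {R}. Arguments okp {R}.

Section Part3.
Variable R : realType.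
Local Notation phi := (fun x : R => x * ln x).

Lemma cvg_near_eq (f g : nat -> R) (l : R) :
  (\forall N \near \oo, f N = g N) -> f @ \oo --> l -> g @ \oo --> l.
Proof. by move=> h hf; apply: cvg_trans hf; apply: near_eq_cvg. Qed.

Definition pN (l : R) (N : nat) : R := l / N.+1%:R.

Lemma pN_cvg (l : R) : pN l @ \oo --> 0.
Proof.
have -> : pN l = (fun N => l * harmonic N) by [].
rewrite -(mulr0 l); apply: cvgMl_tmp; exact: cvg_harmonic.
Qed.

Lemma ev_big (l : R) : \forall N \near \oo, l < N.+1%:R.
Proof.
apply: filterS (nbhs_infty_gtr l) => N hN; apply: lt_le_trans hN _.
by rewrite ler_nat.
Qed.

Lemma pN_01 (l : R) N : 0 < l -> l < N.+1%:R -> 0 < pN l N < 1.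
Proof.
move=> l0 hN; rewrite /pN divr_gt0 //= ltr_pdivrMr // mul1r //.
Qed.

Lemma exp_lim (l : R) : 0 < l -> (fun N => (1 - pN l N) ^+ N.+1) @ \oo --> expR (- l).
Proof.
move=> l0.
apply: (squeeze_cvgr (f := fun N => expR (- l / (1 - pN l N))) (h := fun=> expR (- l))).
- apply: filterS (ev_big l) => N hN.
  have /andP[t0 t1] := @pN_01 l N l0 hN.
  set t := pN l N.
  have q0 : 0 < 1 - t by rewrite subr_gt0.
  have e : (1 - t) ^+ N.+1 = expR (N.+1%:R * ln (1 - t)) by rewrite expRM_natl lnK // posrE.
  have lt : N.+1%:R * t = l by rewrite /t /pN mulrC divfK // pnatr_eq0.
  clearbody t.
  rewrite e !ler_expR; apply/andP; split.
  + have h1 : ln ((1 - t)^-1) <= (1 - t)^-1 - 1.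
      have H := @le_ln1Dx R ((1 - t)^-1 - 1).
      rewrite (_ : 1 + ((1 - t)^-1 - 1) = (1 - t)^-1) in H; last by ring.
      apply: H; have := invr_gt0 (1 - t); rewrite q0 => h; lra.
    rewrite lnV ?posrE // in h1.
    have h2 : - (t / (1 - t)) <= ln (1 - t).
      rewrite (_ : t / (1 - t) = (1 - t)^-1 - 1); first lra.
      by field; rewrite gt_eqF.
    rewrite -lt (_ : - (N.+1%:R * t) / (1 - t) = N.+1%:R * (- (t / (1 - t)))); last first.
      by rewrite mulrN mulNr mulrA.
    by apply: ler_wpM2l => //; rewrite ler0n.
  + have h1 : ln (1 - t) <= - t.
      have H := @le_ln1Dx R (- t); apply: H; lra.
    rewrite -lt -mulrN; apply: ler_wpM2l => //; rewrite ler0n.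
- have H : (fun N => - l / (1 - pN l N)) @ \oo --> - l / (1 - 0).
    apply: cvgMl_tmp; apply: cvgV; first by rewrite subr0 oner_eq0.
    apply: cvgB; [exact: cvg_cst | exact: pN_cvg].
  rewrite subr0 divr1 in H.
  exact: (continuous_cvg _ (@continuous_expR R (- l)) H).
- exact: cvg_cst.
Qed.

Lemma binp_ratio n (p : R) k : (k < n)%N -> p < 1 ->
  binp n p k.+1 = binp n p k * ((n%:R - k%:R) * p / (k.+1%:R * (1 - p))).
Proof.
move=> kn p1.
have qn : 1 - p != 0 by rewrite subr_eq0 (gt_eqF p1).
have hC : 'C(n, k.+1)%:R = (n%:R - k%:R) * 'C(n, k)%:R / k.+1%:R :> R.
  have := congr1 (fun x => x%:R : R) (mul_bin_left n k).
  rewrite !natrM natrB ?(ltnW kn) // => <-; field; by rewrite nat1r pnatr_eq0.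
rewrite /binp hC -(subnSK kn) !exprS; field; by rewrite qn nat1r pnatr_eq0.
Qed.

Lemma binp_down N (p : R) k : (k <= N)%N -> p < 1 ->
  binp N p k = binp N.+1 p k * ((N.+1%:R - k%:R) / (N.+1%:R * (1 - p))).
Proof.
move=> kN p1.
have qn : 1 - p != 0 by rewrite subr_eq0 (gt_eqF p1).
have hC : 'C(N, k)%:R = (N.+1%:R - k%:R) * 'C(N.+1, k)%:R / N.+1%:R :> R.
  have := congr1 (fun x => x%:R : R) (mul_bin_down N.+1 k).
  rewrite !natrM natrB ?(leqW kN) //= => <-; field; by rewrite nat1r pnatr_eq0.
rewrite /binp hC (subSn kN) !exprS; field; by rewrite ?qn ?nat1r ?pnatr_eq0.
Qed.

Lemma binA (l : R) k : 0 < l ->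
  (fun N => binp N.+1 (pN l N) k) @ \oo --> poisson_pmf l k.
Proof.
move=> l0; elim: k => [|k IH].
  have -> : poisson_pmf l 0 = expR (- l) by rewrite /poisson_pmf l0 expr0 fact0 invr1 !mul1r.
  have -> : (fun N => binp N.+1 (pN l N) 0) = (fun N => (1 - pN l N) ^+ N.+1).
    by apply: funext => N; rewrite /binp bin0 subn0 expr0 !mul1r.
  exact: exp_lim.
have ev : \forall N \near \oo, (k < N.+1)%N /\ l < N.+1%:R.
  apply: filterS2 (nbhs_infty_ge k) (ev_big l) => N h1 h2; split => //.
have H : (fun N => binp N.+1 (pN l N) k * ((l - k%:R * pN l N) / (k.+1%:R * (1 - pN l N))))
   @ \oo --> poisson_pmf l k * ((l - k%:R * 0) / (k.+1%:R * (1 - 0))).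
  apply: cvgM => //; apply: cvgM.
    apply: cvgB; first exact: cvg_cst.
    by apply: cvgMl_tmp; exact: pN_cvg.
  apply: cvgV; first by rewrite subr0 mulr1 pnatr_eq0.
  apply: cvgMl_tmp; apply: cvgB; first exact: cvg_cst.
  exact: pN_cvg.
have -> : poisson_pmf l k.+1 = poisson_pmf l k * ((l - k%:R * 0) / (k.+1%:R * (1 - 0))).
  rewrite /poisson_pmf l0 mulr0 subr0 subr0 mulr1 factS natrM exprS.
  by rewrite /poisson_pmf; field; rewrite nat1r !pnatr_eq0 /= -lt0n fact_gt0.
apply: cvg_near_eq H. apply: filterS ev. move=> N [h1 h2].
have /andP[t0 t1] := @pN_01 l N l0 h2.
rewrite binp_ratio //; congr (_ * (_ / _)); rewrite mulrBl; congr (_ - _).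
by rewrite /pN mulrC divfK // pnatr_eq0.
Qed.

Lemma binB (l : R) k : 0 < l ->
  (fun N => binp N (pN l N) k) @ \oo --> poisson_pmf l k.
Proof.
move=> l0.
have H : (fun N => binp N.+1 (pN l N) k * ((1 - k%:R * pN 1 N) / (1 - pN l N)))
   @ \oo --> poisson_pmf l k * ((1 - k%:R * 0) / (1 - 0)).
  apply: cvgM; first exact: binA.
  apply: cvgM.
    apply: cvgB; first exact: cvg_cst.
    by apply: cvgMl_tmp; exact: pN_cvg.
  apply: cvgV; first by rewrite subr0 oner_eq0.
  apply: cvgB; first exact: cvg_cst.
  exact: pN_cvg.
rewrite mulr0 !subr0 divr1 mulr1 in H.
apply: cvg_near_eq H; apply: filterS2 (nbhs_infty_ge k) (ev_big l) => N h1 h2.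
have /andP[t0 t1] := @pN_01 l N l0 h2.
have qn : 1 - pN l N != 0 by rewrite subr_eq0 (gt_eqF t1).
rewrite (@binp_down N _ k h1 t1); congr (_ * _).
rewrite /pN; field; by rewrite nat1r pnatr_eq0 /= subr_eq0 gt_eqF.
Qed.

Lemma cvg_sumo n (F : nat -> nat -> R) (L : nat -> R) :
  (forall k, (fun N => F N k) @ \oo --> L k) ->
  (fun N => \sum_(k < n) F N k) @ \oo --> \sum_(k < n) L k.
Proof.
move=> h; elim: n => [|n IH].
  rewrite big_ord0; under eq_cvg do rewrite big_ord0; exact: cvg_cst.
rewrite big_ord_recr /=; under eq_cvg do rewrite big_ord_recr /=.
by apply: cvgD => //; exact: h.
Qed.

Lemma sum_tail (G : nat -> R) a b : (a <= b)%N -> (forall k, (a <= k)%N -> G k = 0) ->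
  \sum_(k < b) G k = \sum_(k < a) G k.
Proof.
move=> hab hG; rewrite -!(big_mkord xpredT) (big_cat_nat (leq0n a) hab) /=.
have -> : \sum_(a <= i < b) G i = 0.
  by rewrite big_nat_cond big1 // => i /andP[/andP[hi _] _]; exact: hG.
by rewrite addr0.
Qed.

Lemma EB_trunc M (p : R) (F : nat -> R) n : (forall k, (n < k)%N -> F k = 0) ->
  EB M p F = \sum_(k < n.+1) binp M p k * F k.
Proof.
move=> hF; rewrite /EB.
transitivity (\sum_(k < (M + n).+1) binp M p k * F k).
  symmetry; apply: (@sum_tail (fun k => binp M p k * F k)); first by rewrite ltnS leq_addr.
  by move=> k hk; rewrite binp_big ?mul0r.
apply: (@sum_tail (fun k => binp M p k * F k)).
  by rewrite ltnS leq_addl.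
by move=> k hk; rewrite hF ?mulr0.
Qed.

Lemma phi_cvg (x : nat -> R) (a : R) : 0 < a -> x @ \oo --> a ->
  (fun N => phi (x N)) @ \oo --> phi a.
Proof.
move=> a0 hx; apply: cvgM => //.
exact: (continuous_cvg _ (continuous_ln a0) hx).
Qed.

Lemma hf_cvg (l : R) (f : nat -> R) t : 0 <= f t -> (f t = 0 -> f t.+1 = 0) ->
  (fun N => hf (pN l N) f t) @ \oo --> (f t.+1 - f t) ^+ 2 / f t.
Proof.
move=> ft fdc; case: (eqVneq (f t) 0) => [z|nz].
  have -> : (fun N => hf (pN l N) f t) = (fun=> (f t.+1 - f t) ^+ 2 / f t).
    by apply: funext => N; rewrite /hf z (fdc z) !mulr0 addr0 invr0 !mulr0.
  exact: cvg_cst.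
have hD : (fun N => (1 - pN l N) * f t + pN l N * f t.+1) @ \oo --> (1 - 0) * f t + 0 * f t.+1.
  apply: cvgD; apply: cvgMr_tmp; last exact: pN_cvg.
  apply: cvgB; [exact: cvg_cst | exact: pN_cvg].
rewrite subr0 mul1r mul0r addr0 in hD.
have hV := cvgV nz hD.
rewrite /hf; apply: cvgMl_tmp; exact: hV.
Qed.

Lemma pmlsi (l : R) (f : nat -> R) n : 0 < l -> (forall k, 0 <= f k) ->
  (forall k, (n < k)%N -> f k = 0) -> (forall t, f t = 0 -> f t.+1 = 0) ->
  \sum_(k < n.+1) poisson_pmf l k * f k = 1 ->
  \sum_(k < n.+1) poisson_pmf l k * phi (f k)
    <= l * \sum_(t < n.+1) poisson_pmf l t * ((f t.+1 - f t) ^+ 2 / f t).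
Proof.
move=> l0 f0 fn fdc f1.
have fn' : forall k, (n < k)%N -> phi (f k) = 0 by move=> k hk; rewrite fn // mul0r.
pose u N := EB N.+1 (pN l N) (fun k => phi (f k)) - phi (EB N.+1 (pN l N) f).
pose v N := N.+1%:R * (pN l N * (1 - pN l N)) * EB N (pN l N) (hf (pN l N) f).
have hu : u @ \oo --> \sum_(k < n.+1) poisson_pmf l k * phi (f k) - phi 1.
  have -> : u = (fun N => \sum_(k < n.+1) binp N.+1 (pN l N) k * phi (f k)
       - phi (\sum_(k < n.+1) binp N.+1 (pN l N) k * f k)).
    by apply: funext => N; rewrite /u (@EB_trunc _ _ _ n fn) (@EB_trunc _ _ _ n fn').
  have h1 : (fun N => \sum_(k < n.+1) binp N.+1 (pN l N) k * phi (f k)) @ \oo -->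
     \sum_(k < n.+1) poisson_pmf l k * phi (f k).
    apply: (@cvg_sumo n.+1 (fun N k => binp N.+1 (pN l N) k * phi (f k)) (fun k => poisson_pmf l k * phi (f k))) => k.
    apply: cvgMr_tmp; exact: binA.
  have h2 : (fun N => \sum_(k < n.+1) binp N.+1 (pN l N) k * f k) @ \oo --> (1 : R).
    rewrite -f1; apply: (@cvg_sumo n.+1 (fun N k => binp N.+1 (pN l N) k * f k) (fun k => poisson_pmf l k * f k)) => k.
    apply: cvgMr_tmp; exact: binA.
  exact: cvgB h1 (@phi_cvg _ _ ltr01 h2).
have hv : v @ \oo --> l * (1 - 0) * \sum_(t < n.+1) poisson_pmf l t * ((f t.+1 - f t) ^+ 2 / f t).
  have -> : v = (fun N => l * (1 - pN l N) * \sum_(t < n.+1) binp N (pN l N) t * hf (pN l N) f t).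
    apply: funext => N; rewrite /v (@EB_trunc _ _ (hf (pN l N) f) n).
      by rewrite mulrA (_ : N.+1%:R * pN l N = l) // /pN mulrC divfK // pnatr_eq0.
    by move=> k hk; rewrite /hf (fn k hk) (fn k.+1 (leqW hk)) subrr expr0n /= mul0r.
  apply: cvgM.
    apply: cvgMl_tmp; apply: cvgB; [exact: cvg_cst | exact: pN_cvg].
  apply: (@cvg_sumo n.+1 (fun N t => binp N (pN l N) t * hf (pN l N) f t) (fun t => poisson_pmf l t * ((f t.+1 - f t) ^+ 2 / f t))) => t.
  apply: cvgM; first exact: binB.
  apply: hf_cvg => //; exact: fdc.
rewrite subr0 mulr1 in hv.
have huv : \forall N \near \oo, u N <= v N.
  apply: filterS (ev_big l) => N hN; rewrite /u /v.
  have := @fmlsi R N.+1 (pN l N) f (@pN_01 l N l0 hN) f0; exact.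
have H := ler_cvg_to hu hv huv.
rewrite ln1 mulr0 subr0 in H; exact: H.
Qed.

End Part3.

Arguments pN {R}.

Section Part4.
Variable R : realType.

Lemma Pf_poly (s : seq R) k : Pf s k = (\prod_(a <- s) ((1 - a)%:P + a *: 'X))`_k.
Proof.
elim: s k => [|a s IH] k; first by rewrite big_nil coef1.
rewrite big_cons mulrDl coefD coefCM -scalerAl coefZ coefXM /=.
by case: k => [|k] /=; rewrite !IH.
Qed.

Lemma dist_poly n (p : 'I_n -> R) k :
  dist_Sn p k = (\prod_(i < n) ((1 - p i)%:P + p i *: 'X))`_k.
Proof.
have E : \prod_(i < n) ((1 - p i)%:P + p i *: 'X) =
   \prod_(i < n) \sum_(b : bool) ((if b then p i else 1 - p i) *: 'X^b).
  apply: eq_bigr => i _; rewrite big_bool /= expr1 expr0 addrC; congr (_ + _).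
  by rewrite -alg_polyC.
rewrite E bigA_distr_bigA /= coef_sum /dist_Sn.
rewrite [RHS](bigID (fun x : {ffun 'I_n -> bool} => (\sum_(i < n) (x i : nat))%N == k)) /=.
rewrite [X in _ = _ + X]big1 ?addr0; last first.
  move=> x /negbTE hx; rewrite scaler_prod -expr_sum coefZ coefXn eq_sym hx mulr0 //.
apply: eq_bigr => x /eqP hx; rewrite scaler_prod -expr_sum coefZ coefXn hx eqxx mulr1.
by apply: eq_bigr => i _; case: (x i).
Qed.

Lemma dist_Pf n (p : 'I_n -> R) k : dist_Sn p k = Pf [seq p i | i <- enum 'I_n] k.
Proof. by rewrite dist_poly Pf_poly big_map big_enum. Qed.

End Part4.

Lemma Po_pos (R : realType) (l : R) k : 0 < l -> 0 < poisson_pmf l k.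
Proof.
move=> l0; rewrite /poisson_pmf l0; apply: mulr_gt0; last exact: expR_gt0.
apply: mulr_gt0; first exact: exprn_gt0.
by rewrite invr_gt0 ltr0n fact_gt0.
Qed.

Lemma PoS (R : realType) (l : R) k : 0 < l ->
  poisson_pmf l k.+1 = poisson_pmf l k * l / k.+1%:R.
Proof.
move=> l0; rewrite /poisson_pmf l0 factS natrM exprS.
by field; rewrite nat1r !pnatr_eq0 /= -lt0n fact_gt0.
Qed.

Theorem theorem1 (R : realType) (n : nat) (p : 'I_n -> R)
  (hp : forall i, 0 <= p i /\ p i < 1)
  (hlam : 0 < \sum_(i < n) p i) :
  (rel_ent (dist_Sn p) (poisson_pmf (\sum_(i < n) p i))
   <= ((\sum_(i < n) p i)^-1 * \sum_(i < n) p i ^+ 3 / (1 - p i))%:E)%E.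
Proof.
set l := \sum_(i < n) p i.
set s := [seq p i | i <- enum 'I_n].
have ok : okp s.
  rewrite /okp all_map; apply/allP => i _ /=; by case: (hp i) => -> ->.
have hs : size s = n by rewrite size_map size_enum_ord.
have hl : lam s = l by rewrite /lam big_map big_enum.
have hsum3 : \sum_(a <- s) a ^+ 3 / (1 - a) = \sum_(i < n) p i ^+ 3 / (1 - p i).
  by rewrite big_map big_enum.
set P := Pf s.
have hP : forall k, dist_Sn p k = P k by move=> k; rewrite dist_Pf.
set Po := poisson_pmf l.
have Pop : forall k, 0 < Po k by move=> k; exact: Po_pos.
have Pon : forall k, Po k != 0 by move=> k; rewrite gt_eqF.
have l0 : l != 0 by rewrite gt_eqF.
pose f k := P k / Po k.
have key := @pmlsi R l f n hlam.
have f0 : forall k, 0 <= f k by move=> k; rewrite /f divr_ge0 // ?Pf_ge0 // ltW.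
have fn : forall k, (n < k)%N -> f k = 0.
  by move=> k hk; rewrite /f /P Pf_big ?hs // mul0r.
have fdc : forall t, f t = 0 -> f t.+1 = 0.
  move=> t; rewrite /f => /eqP; rewrite mulf_eq0 invr_eq0 (negbTE (Pon t)) orbF => /eqP h.
  by rewrite /P (@Pf_dc _ _ _ ok h) mul0r.
have f1 : \sum_(k < n.+1) Po k * f k = 1.
  rewrite -(@Pf_sum _ _ ok) hs; apply: eq_bigr => k _; by rewrite /f mulrC divfK.
have {key} key := key f0 fn fdc f1.
have LHS : \sum_(k < n.+1) Po k * (f k * ln (f k)) = \sum_(k < n.+1) P k * ln (P k / Po k).
  by apply: eq_bigr => k _; rewrite /f mulrA (mulrC (Po k)) divfK.
have RHS : l * \sum_(t < n.+1) Po t * ((f t.+1 - f t) ^+ 2 / f t) = l^-1 * Jf P l n.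
  rewrite /Jf mulr_sumr [RHS]mulr_sumr; apply: eq_bigr => t _.
  rewrite /f /Af /Po PoS // -/Po.
  case: (eqVneq (P t) 0) => [z|nz].
    have z1 : P t.+1 = 0 := @Pf_dc _ _ _ ok z.
    by rewrite z z1 !(mul0r, mulr0, subrr, invr0, expr0n) /=.
  by field; rewrite ?nz ?Pon ?l0 ?nat1r ?pnatr_eq0.
rewrite /= LHS RHS in key.
have term : forall k, rel_ent_term (dist_Sn p) Po k = (P k * ln (P k / Po k))%:E.
  move=> k; rewrite /rel_ent_term hP; case: eqP => [->|_]; first by rewrite mul0r.
  by rewrite (negbTE (Pon k)).
have E : limn (fun N => (\sum_(k < N) rel_ent_term (dist_Sn p) Po k)%E) =
    (\sum_(k < n.+1) P k * ln (P k / Po k))%:E.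
  apply: lim_near_cst => //.
  apply: filterS (nbhs_infty_ge n.+1) => N hN.
  under eq_bigr do rewrite term.
  rewrite sumEFin; congr (_%:E).
  apply: (@sum_tail R (fun k => P k * ln (P k / Po k))) => // k hk.
  by rewrite /P Pf_big ?hs // mul0r.
rewrite /rel_ent E lee_fin.
apply: le_trans key _.
apply: ler_wpM2l; first by rewrite invr_ge0 ltW.
have := @J_bound _ _ ok; rewrite hl hs hsum3; exact.
Qed.
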